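(* Let $G$ be a finite simple graph with an initial configuration $c_0:V(G)\to\mathbb{Z}$ and let $(c_t)_{t\ge0}$ be the configurations of the diffusion process. If a vertex $v$ is unbounded, then there exists $u\in N(v)$ that is also unbounded.
   Context: Diffusion process: $c_{t+1}(u)=c_t(u)-|\{w\in N(u): c_t(u)>c_t(w)\}|+|\{w\in N(u): c_t(u)<c_t(w)\}|$ for all $u$ simultaneously. A vertex $v$ is bounded if there exist integers $m\le M$ with $m\le c_t(v)\le M$ for all $t\ge0$, and unbounded otherwise. *)

(* Defs.v *)
From mathcomp Require Import all_boot all_order all_algebra.
Set Implicit Arguments. Unset Strict Implicit. Unset Printing Implicit Defensive.
Import Order.TTheory GRing.Theory Num.Theory.
Local Open Scope ring_scope.

(* A finite simple graph: vertex set a finType, adjacency a symmetric,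
   irreflexive boolean relation. N(u) = [set w | e u w]. *)
Definition simple_graph (T : finType) (e : rel T) : Prop :=
  symmetric e /\ irreflexive e.

Definition diffuse_step (T : finType) (e : rel T) (c : T -> int) : T -> int :=
  fun u => c u - (#|[set w | e u w & c w < c u]|)%:Z
               + (#|[set w | e u w & c u < c w]|)%:Z.

Definition config (T : finType) (e : rel T) (c0 : T -> int) (t : nat) : T -> int :=
  iter t (diffuse_step e) c0.

Definition bounded_vertex (T : finType) (e : rel T) (c0 : T -> int) (v : T) : Prop :=
  exists m M : int, m <= M /\ forall t : nat, m <= config e c0 t v <= M.

(* Main.v *)
Require Import Defs.
From mathcomp Require Import all_boot all_order all_algebra.
From mathcomp Require Import zify.
From Stdlib Require Import Classical.
Set Implicit Arguments. Unset Strict Implicit. Unset Printing Implicit Defensive.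
Import Order.TTheory GRing.Theory Num.Theory.
Local Open Scope ring_scope.

Lemma step_up (T : finType) (e : rel T) (c : T -> int) (v : T) (M : int) :
  (forall w, e v w -> c w <= M) ->
  diffuse_step e c v <= Num.max (c v) (M + #|T|%:Z).
Proof.
move=> HM; rewrite /diffuse_step.
have h1 := max_card [set w | e v w & c w < c v].
have h2 := max_card [set w | e v w & c v < c w].
case: (lerP (c v) M) => hc.
- have : c v + #|[set w | e v w & c v < c w]|%:Z <= M + #|T|%:Z.
    apply: lerD => //; by rewrite lez_nat.
  move=> H; rewrite le_max; apply/orP; right.
  move: H; set a := (X in _ + X%:Z <= _); set b := #|_|; lia.
- have -> : #|[set w | e v w & c v < c w]| = 0%N.
    apply/eqP; rewrite cards_eq0; apply/eqP/setP => w; rewrite !inE.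
    apply/negbTE/negP => /andP [ew lt].
    have := HM w ew; lia.
  rewrite le_max; apply/orP; left; set b := #|_|; lia.
Qed.

Lemma step_lo (T : finType) (e : rel T) (c : T -> int) (v : T) (m : int) :
  (forall w, e v w -> m <= c w) ->
  Num.min (c v) (m - #|T|%:Z) <= diffuse_step e c v.
Proof.
move=> Hm; rewrite /diffuse_step.
have h1 := max_card [set w | e v w & c w < c v].
have h2 := max_card [set w | e v w & c v < c w].
case: (lerP m (c v)) => hc.
- rewrite ge_min; apply/orP; right.
  move: h1 h2; set a := #|[set w | e v w & c w < c v]|; set b := #|_|; lia.
- have -> : #|[set w | e v w & c w < c v]| = 0%N.
    apply/eqP; rewrite cards_eq0; apply/eqP/setP => w; rewrite !inE.
    apply/negbTE/negP => /andP [ew lt].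
    have := Hm w ew; lia.
  rewrite ge_min; apply/orP; left; set b := #|_|; lia.
Qed.

Lemma bounds_seq (T : finType) (e : rel T) (c0 : T -> int) (s : seq T) :
  (forall u, u \in s -> bounded_vertex e c0 u) ->
  exists m M : int, forall u, u \in s -> forall t, m <= config e c0 t u <= M.
Proof.
elim: s => [|x s IH] H.
  by exists 0, 0 => u.
have [m [M HmM]] : exists m M : int, forall u, u \in s -> forall t, m <= config e c0 t u <= M.
  by apply: IH => u us; apply: H; rewrite inE us orbT.
have [mx [Mx [_ Hx]]] := H x (mem_head _ _).
exists (Num.min m mx), (Num.max M Mx) => u; rewrite inE => /orP [/eqP->|us] t.
  have /andP [a b] := Hx t.
  by rewrite ge_min le_max a b !orbT.
have /andP [a b] := HmM u us t.
by rewrite ge_min le_max a b.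
Qed.

Theorem lemma5 (T : finType) (e : rel T) (c0 : T -> int) (v : T) :
  simple_graph e ->
  ~ bounded_vertex e c0 v ->
  exists u : T, e v u /\ ~ bounded_vertex e c0 u.
Proof.
move=> _ Hv; apply: NNPP => Hn; apply: Hv.
have Hb : forall u, u \in [seq w <- enum T | e v w] -> bounded_vertex e c0 u.
  move=> u; rewrite mem_filter => /andP [evu _].
  apply: NNPP => nb; apply: Hn; by exists u.
have [m [M HmM]] := bounds_seq Hb.
have Hnb : forall w t, e v w -> m <= config e c0 t w <= M.
  by move=> w t ew; apply: HmM; rewrite mem_filter ew mem_enum.
set B := Num.max (c0 v) (M + #|T|%:Z).
set A := Num.min (c0 v) (m - #|T|%:Z).
exists A, B; split.
  by rewrite /A /B ge_min le_max lexx.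
elim=> [|t /andP [IHl IHu]].
  by rewrite /= /A /B ge_min le_max !lexx.
rewrite /config iterS -/(config e c0 t); apply/andP; split.
- apply: le_trans (step_lo (m := m) _); last by move=> w ew; case/andP: (Hnb w t ew).
  rewrite le_min IHl /A ge_min lexx orbT //.
- apply: le_trans (step_up (M := M) _) _; first by move=> w ew; case/andP: (Hnb w t ew).
  rewrite ge_max IHu /B le_max lexx orbT //.
Qed.
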